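(* Let $V$ be a real vector space and $X\subseteq V$ infinite. Then the join-semilattice of compact elements of $Co(V,X)$ contains a join-subsemilattice isomorphic to $Co^{<\omega}(\mathbb{N})$ or one isomorphic to $\mathcal{P}^{<\omega}(\mathbb{N})$.
   Context: $Co(V,X)$ is the lattice (under inclusion) of sets $C\cap X$ with $C$ convex in $V$; its compact elements are the sets $\mathrm{conv}(F)\cap X$ with $F\subseteq X$ finite, and they form a join-semilattice. $Co^{<\omega}(\mathbb{N})$ is the join-semilattice of finite intervals of the chain $\mathbb{N}$ ordered by inclusion, and $\mathcal{P}^{<\omega}(\mathbb{N})$ the join-semilattice of finite subsets of $\mathbb{N}$ ordered by inclusion. *)

(* Defs.v *)
From HB Require Import structures.
From mathcomp Require Import all_boot all_order all_algebra.
From mathcomp Require Import boolp classical_sets cardinality reals convex.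
Set Implicit Arguments. Unset Strict Implicit. Unset Printing Implicit Defensive.
Import Order.TTheory GRing.Theory Num.Theory.
Local Open Scope classical_set_scope.
Local Open Scope ring_scope.

Definition conv_hull (R : realType) (V : lmodType R) (A : set V) : set V :=
  [set x | forall C : set (convex_lmodType V),
     convex_set C -> A `<=` C -> C x].

Definition Co_compact (R : realType) (V : lmodType R) (X : set V) : set (set V) :=
  [set S | exists F : set V, [/\ finite_set F, F `<=` X & S = conv_hull F `&` X]].

(* Join in the lattice Co(V,X) of two elements A, B (subsets of X):
   the least C ∩ X (C convex) containing A ∪ B, i.e. conv(A ∪ B) ∩ X. *)
Definition Co_join (R : realType) (V : lmodType R) (X : set V) (A B : set V) : set V :=
  conv_hull (A `|` B) `&` X.

(* Co^{<ω}(N): the finite intervals of the chain N (including the empty one). *)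
Definition nat_fin_interval (I : set nat) : Prop :=
  I = set0 \/ exists a b : nat, I = [set k | (a <= k <= b)%N].

Definition interval_join (I J : set nat) : set nat :=
  [set k | exists i j, [/\ (I `|` J) i, (I `|` J) j & (i <= k <= j)%N]].

(* P^{<ω}(N): the finite subsets of N, with join = union. *)
Definition nat_fin_subset (I : set nat) : Prop := finite_set I.

(* Its image is then a
   join-subsemilattice isomorphic to (D, jD). *)
Definition join_embedding (R : realType) (V : lmodType R) (X : set V)
    (D : set (set nat)) (jD : set nat -> set nat -> set nat)
    (f : set nat -> set V) : Prop :=
  [/\ forall I, D I -> Co_compact X (f I),
      forall I J, D I -> D J -> f I = f J -> I = J &
      forall I J, D I -> D J -> f (jD I J) = Co_join X (f I) (f J)].

(* Main.v *)
From HB Require Import structures.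
From mathcomp Require Import all_boot all_order all_algebra.
From mathcomp Require Import boolp classical_sets cardinality reals convex.
From mathcomp Require Import ring lra zify interval_inference.
Require Import Defs.
Set Implicit Arguments. Unset Strict Implicit. Unset Printing Implicit Defensive.
Import Order.TTheory GRing.Theory Num.Theory.
Local Open Scope ring_scope.

Section Lin.
Variable (R : realType).

Lemma sum_sub (T : zmodType) (F : nat -> T) (L L' : seq nat) :
  uniq L -> uniq L' -> {subset L <= L'} ->
  \sum_(i <- L') (if i \in L then F i else 0) = \sum_(i <- L) F i.
Proof.
move=> uL uL' sLL'; rewrite -big_mkcond /= -big_filter; apply: perm_big.
apply: uniq_perm; rewrite ?filter_uniq // => i; rewrite mem_filter.
by case iL: (i \in L) => //=; rewrite sLL'.
Qed.

Lemma lin_steinitz (W : lmodType R) (m : nat) :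
  forall (w : nat -> W) (sb : seq nat) (u : nat -> W) (s : seq nat),
  size sb = m -> uniq s -> (m < size s)%N ->
  (forall i, i \in s -> exists a : nat -> R, u i = \sum_(k <- sb) a k *: w k) ->
  exists c : nat -> R, (exists i, i \in s /\ c i != 0) /\
     \sum_(i <- s) c i *: u i = 0.
Proof.
elim: m => [|m IH] w sb u s.
  move=> /size0nil -> us; case: s us => [//|i0 s'] us _ hu.
  exists (fun i => (i == i0)%:R); split.
    by exists i0; rewrite mem_head eqxx oner_neq0.
  rewrite big1_seq // => i /andP [_ iin]; have [a ->] := hu i iin.
  by rewrite big_nil scaler0.
case: sb => [//|k0 sb'] [sz] us ltm hu.
have [A hA] : exists A : nat -> nat -> R, forall i, i \in s ->
    u i = \sum_(k <- k0 :: sb') A i k *: w k.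
  have : forall i, exists a : nat -> R, i \in s ->
      u i = \sum_(k <- k0 :: sb') a k *: w k.
    move=> i; have [iin|iin] := boolP (i \in s).
      by have [a ha] := hu i iin; exists a.
    by exists (fun _ => 0).
  by move=> /choice [A hA]; exists A.
have [allz|] := pselect (forall i, i \in s -> A i k0 = 0).
  apply: (IH w sb' u s sz us (ltnW ltm)) => i iin; exists (A i).
  by rewrite hA // big_cons allz // scale0r add0r.
move=> /existsNP [i0] /not_implyP [i0s nz].
set al := A i0 k0.
have al0 : al != 0 by apply/eqP.
set s' := rem i0 s.
have us' : uniq s' by rewrite rem_uniq.
have sz' : (m < size s')%N by rewrite size_rem // -ltnS prednK // (ltn_trans _ ltm).
pose u' i := u i - (A i k0 / al) *: u i0.
have hu' : forall i, i \in s' -> exists a : nat -> R,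
    u' i = \sum_(k <- sb') a k *: w k.
  move=> i iin; have is' : i \in s by apply: (mem_rem iin).
  exists (fun k => A i k - A i k0 / al * A i0 k).
  rewrite /u' (hA i is') (hA i0 i0s) scaler_sumr -sumrB big_cons.
  rewrite !scalerA -scalerBl -/al divfK // subrr scale0r add0r.
  by apply: eq_bigr => k _; rewrite scalerBl scalerA.
have [c' [[i1 [i1s c'nz]] hsum]] := IH w sb' u' s' sz us' sz' hu'.
exists (fun i => if i == i0 then - \sum_(j <- s') c' j * (A j k0 / al) else c' i).
split.
  exists i1; split; first exact: (mem_rem i1s).
  have : i1 != i0.
    by apply: contraTneq i1s => ->; rewrite mem_rem_uniq // inE eqxx.
  by move=> /negbTE ->.
rewrite (perm_big _ (perm_to_rem i0s)) big_cons eqxx /= -/s'.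
have -> : \sum_(j <- s') (if j == i0 then - \sum_(j0 <- s') c' j0 * (A j0 k0 / al)
     else c' j) *: u j = \sum_(j <- s') c' j *: u j.
  apply: eq_big_seq => j js; have : j != i0.
    by apply: contraTneq js => ->; rewrite mem_rem_uniq // inE eqxx.
  by move=> /negbTE ->.
have hs2 : \sum_(j <- s') c' j *: u j =
    (\sum_(j <- s') c' j * (A j k0 / al)) *: u i0.
  apply/eqP; rewrite -subr_eq0 -[X in _ == X]hsum scaler_suml -sumrB.
  by apply/eqP/eq_bigr => j _; rewrite /u' scalerBr scalerA.
by rewrite hs2 scaleNr addNr.
Qed.

End Lin.

Section Aff.
Variable (R : realType) (V : lmodType R).
Implicit Types (P b : nat -> V) (s : seq nat).

Definition aff P s (v : V) := exists c : nat -> R,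
  \sum_(i <- s) c i = 1 /\ \sum_(i <- s) c i *: P i = v.
Definition cc P s (v : V) := exists c : nat -> R,
  (forall i, i \in s -> 0 <= c i) /\
  \sum_(i <- s) c i = 1 /\ \sum_(i <- s) c i *: P i = v.
Definition indep P s := uniq s /\ forall c : nat -> R,
  \sum_(i <- s) c i = 0 -> \sum_(i <- s) c i *: P i = 0 ->
  forall i, i \in s -> c i = 0.

Lemma cc_aff P s v : cc P s v -> aff P s v.
Proof. by move=> [c [_ h]]; exists c. Qed.

Lemma aff_perm P s s' v : perm_eq s s' -> aff P s v -> aff P s' v.
Proof. by move=> pe [c [h1 h2]]; exists c; rewrite -!(perm_big _ pe). Qed.

Lemma cc_perm P s s' v : perm_eq s s' -> cc P s v -> cc P s' v.
Proof.
move=> pe [c [h0 [h1 h2]]]; exists c; rewrite -!(perm_big _ pe); split => //.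
by move=> i; rewrite -(perm_mem pe); apply: h0.
Qed.

Lemma indep_perm P s s' : perm_eq s s' -> indep P s -> indep P s'.
Proof.
move=> pe [us h]; split; first by rewrite -(perm_uniq pe).
move=> c; rewrite -!(perm_big _ pe) => h1 h2 i; rewrite -(perm_mem pe).
exact: h.
Qed.

Lemma scale_if (b : bool) (a : R) (v : V) :
  (if b then a else 0) *: v = if b then a *: v else 0.
Proof. by case: b; rewrite ?scale0r. Qed.

Lemma cc_sub P s s' v : uniq s -> uniq s' -> {subset s <= s'} ->
  cc P s v -> cc P s' v.
Proof.
move=> us us' ss [c [h0 [h1 h2]]].
exists (fun i => if i \in s then c i else 0); split; [|split].
- by move=> i _; case: ifP => // /h0.
- by rewrite sum_sub.
- under eq_bigr do rewrite scale_if. by rewrite sum_sub.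
Qed.

Lemma aff_sub P s s' v : uniq s -> uniq s' -> {subset s <= s'} ->
  aff P s v -> aff P s' v.
Proof.
move=> us us' ss [c [h1 h2]].
exists (fun i => if i \in s then c i else 0); split.
- by rewrite sum_sub.
- under eq_bigr do rewrite scale_if. by rewrite sum_sub.
Qed.

Lemma cc1 P i : cc P [:: i] (P i).
Proof. by exists (fun _ => 1); rewrite !big_seq1 scale1r. Qed.

Lemma cc_mem P s i : uniq s -> i \in s -> cc P s (P i).
Proof.
move=> us iin; apply: (@cc_sub P [:: i]) => //.
  by move=> j; rewrite inE => /eqP ->.
exact: cc1.
Qed.

Lemma aff_mem P s i : uniq s -> i \in s -> aff P s (P i).
Proof. by move=> us iin; apply/cc_aff/cc_mem. Qed.

Lemma aff_dep P s n : aff P s (P n) -> n \notin s -> ~ indep P (n :: s).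
Proof.
move=> [c [h1 h2]] ns [_ hi].
have := hi (fun i => if i == n then -1 else c i).
rewrite !big_cons eqxx.
have e1 : \sum_(j <- s) (if j == n then -1 else c j) = \sum_(j <- s) c j.
  apply: eq_big_seq => j js; have : j != n by apply: contraTneq js => ->.
  by move=> /negbTE ->.
have e2 : \sum_(j <- s) (if j == n then -1 else c j) *: P j = \sum_(j <- s) c j *: P j.
  apply: eq_big_seq => j js; have : j != n by apply: contraTneq js => ->.
  by move=> /negbTE ->.
rewrite e1 e2 h1 h2 addNr scaleN1r addNr => /(_ erefl erefl n).
by rewrite mem_head eqxx => /(_ isT) /eqP; rewrite oppr_eq0 oner_eq0.
Qed.

Lemma indep_cons P s n : indep P s -> ~ aff P s (P n) -> indep P (n :: s).
Proof.
move=> [us hi] na.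
have ns : n \notin s by apply/negP => ns; apply: na; apply: aff_mem.
split; first by rewrite /= ns.
move=> c; rewrite !big_cons => h1 h2.
have cn : c n = 0.
  apply/eqP/negP => /negP cn; apply: na.
  exists (fun i => - c i / c n); split.
    rewrite -mulr_suml sumrN; move/eqP: h1; rewrite addrC addr_eq0 => /eqP ->.
    by rewrite opprK divff.
  under eq_bigr do rewrite mulrC -scalerA.
  rewrite -scaler_sumr; under eq_bigr do rewrite scaleNr.
  rewrite sumrN; move/eqP: h2; rewrite addrC addr_eq0 => /eqP ->.
  by rewrite opprK scalerA mulrC divff // scale1r.
move: h1 h2; rewrite cn add0r scale0r add0r => h1 h2 i.
rewrite inE => /orP [/eqP -> //|]; exact: hi.
Qed.

Lemma indep_sub P s s' : indep P s -> uniq s' -> {subset s' <= s} -> indep P s'.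
Proof.
move=> [us hi] us' ss; split => // c h1 h2 i iin.
have := hi (fun i => if i \in s' then c i else 0).
rewrite sum_sub // h1 => /(_ erefl).
under eq_bigr do rewrite scale_if.
by rewrite sum_sub // h2 => /(_ erefl i (ss _ iin)); rewrite iin.
Qed.

End Aff.

Section Aff2.
Variable (R : realType) (V : lmodType R).
Implicit Types (P b : nat -> V) (s : seq nat).

Lemma sum_pair (F : nat -> V) (G : nat -> R) (r : seq nat) :
  \sum_(k <- r) ((F k, G k) : (V * R^o)%type) =
  (\sum_(k <- r) F k, \sum_(k <- r) G k).
Proof. by elim: r => [|k r IH]; rewrite ?big_nil ?big_cons // IH. Qed.

Lemma sum_fst (F : nat -> (V * R^o)%type) r : (\sum_(i<-r) F i).1 = \sum_(i<-r) (F i).1.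
Proof. by elim: r => [|k r IH]; rewrite ?big_nil ?big_cons //= IH. Qed.
Lemma sum_snd (F : nat -> (V * R^o)%type) r : (\sum_(i<-r) F i).2 = \sum_(i<-r) (F i).2.
Proof. by elim: r => [|k r IH]; rewrite ?big_nil ?big_cons //= IH. Qed.

Lemma steinitz b P sb s : uniq s -> (size sb < size s)%N ->
  (forall i, i \in s -> aff b sb (P i)) -> ~ indep P s.
Proof.
move=> us lt ha [_ hi].
have hu : forall i, i \in s -> exists a : nat -> R,
    ((P i, 1) : (V * R^o)%type) = \sum_(k <- sb) a k *: ((b k, 1) : (V * R^o)%type).
  move=> i iin; have [a [h1 h2]] := ha i iin; exists a.
  rewrite (eq_bigr (fun k => (a k *: b k, a k * 1))) // sum_pair.
  rewrite h2; congr pair; transitivity (\sum_(k <- sb) a k); first by rewrite h1.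
  by apply: eq_bigr => k _; rewrite mulr1.
have [c [[i [iin ci]] hs]] := @lin_steinitz R (V * R^o)%type (size sb)
   (fun k => (b k, 1)) sb (fun i => (P i, 1)) s erefl us lt hu.
have h1 := congr1 fst hs; have h2 := congr1 snd hs.
move: h1 h2; rewrite sum_fst sum_snd /= => h1 h2.
move: ci; rewrite (hi c) ?eqxx //.
rewrite -[RHS]h2; apply: eq_bigr => j _; exact: (esym (mulr1 (c j))).
Qed.

Lemma sum_rem (T : zmodType) (F : nat -> T) s j : j \in s ->
  \sum_(i <- s) F i = F j + \sum_(i <- rem j s) F i.
Proof. by move=> js; rewrite (perm_big _ (perm_to_rem js)) big_cons. Qed.

Lemma dep_rem P s j (c : nat -> R) : uniq s -> j \in s -> c j != 0 ->
  \sum_(i <- s) c i = 0 -> \sum_(i <- s) c i *: P i = 0 ->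
  forall v, aff P s v -> aff P (rem j s) v.
Proof.
move=> us js cj h1 h2 v [a [a1 a2]].
rewrite (sum_rem _ js) in h1; rewrite (sum_rem _ js) in h2.
rewrite (sum_rem _ js) in a1; rewrite (sum_rem _ js) in a2.
move: h1 h2 a1 a2; set s' := rem j s => h1 h2 a1 a2.
pose e i := - c i / c j.
have e1 : \sum_(i <- s') e i = 1.
  rewrite /e -mulr_suml sumrN; move/eqP: h1; rewrite addrC addr_eq0 => /eqP ->.
  by rewrite opprK divff.
have e2 : \sum_(i <- s') e i *: P i = P j.
  rewrite /e; under eq_bigr do rewrite mulrC -scalerA.
  rewrite -scaler_sumr; under eq_bigr do rewrite scaleNr.
  rewrite sumrN; move/eqP: h2; rewrite addrC addr_eq0 => /eqP ->.
  by rewrite opprK scalerA mulrC divff // scale1r.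
exists (fun i => a i + a j * e i); split.
  by rewrite big_split /= -mulr_sumr e1 mulr1 addrC.
under eq_bigr do rewrite scalerDl -scalerA.
by rewrite big_split /= -scaler_sumr e2 addrC.
Qed.

Lemma cc_rem0 P s j (c : nat -> R) v : j \in s -> c j = 0 ->
  (forall i, i \in s -> 0 <= c i) -> \sum_(i <- s) c i = 1 ->
  \sum_(i <- s) c i *: P i = v -> cc P (rem j s) v.
Proof.
move=> js cj h0 h1 h2; rewrite (sum_rem _ js) cj add0r in h1.
rewrite (sum_rem _ js) cj scale0r add0r in h2; exists c; split => //.
by move=> i /mem_rem; apply: h0.
Qed.

End Aff2.

Definition infP (P : nat -> Prop) := forall n, exists x, (n <= x)%N /\ P x.
Definition allin (P : nat -> Prop) (u : seq nat) := forall x, x \in u -> P x.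

Lemma ramsey k : forall (c : seq nat -> bool) (P : nat -> Prop), infP P ->
  exists Q b, [/\ infP Q, (forall x, Q x -> P x) &
    forall u, sorted ltn u -> size u = k -> allin Q u -> c u = b].
Proof.
elim: k => [|k IH] c P hP.
  by exists P, (c [::]); split => // u _ /size0nil ->.
have F : forall P0 : nat -> Prop, exists t : nat * (nat -> Prop) * bool,
    infP P0 -> [/\ P0 t.1.1, (forall x, t.1.2 x -> P0 x /\ (t.1.1 < x)%N),
      infP t.1.2 & forall u, sorted ltn u -> size u = k -> allin t.1.2 u ->
      c (t.1.1 :: u) = t.2].
  move=> P0; have [hP0|hP0] := pselect (infP P0); last by exists (0%N, P0, true).
  have [a [_ Pa]] := hP0 0%N.
  pose P1 x := P0 x /\ (a < x)%N.
  have hP1 : infP P1.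
    move=> n; have [x [nx Px]] := hP0 (maxn n a.+1); exists x; split.
      exact: leq_trans (leq_maxl _ _) nx.
    by split => //; exact: leq_trans (leq_maxr _ _) nx.
  have [Q [b [hQ QP hom]]] := IH (fun u => c (a :: u)) P1 hP1.
  by exists (a, Q, b) => _; split => // x /QP.
have [g hg] := choice F.
pose Ps n := iter n (fun P0 => (g P0).1.2) P.
pose a n := (g (Ps n)).1.1.
pose bb n := (g (Ps n)).2.
have infPs : forall n, infP (Ps n).
  by elim=> [|n IHn] //=; have [] := hg _ IHn.
have spec n := hg _ (infPs n).
have sub n x : Ps n.+1 x -> Ps n x /\ (a n < x)%N.
  by have [_ h _ _] := spec n; apply: h.
have mono i j : (i <= j)%N -> forall x, Ps j x -> Ps i x.
  move=> /subnK <-; elim: (j - i)%N => [//|d IHd] x /= /sub [] h _.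
  exact: IHd.
have ain n : Ps n (a n) by have [] := spec n.
have ainc n : (a n < a n.+1)%N by have [] := sub _ _ (ain n.+1).
have amono i j : (i < j)%N -> (a i < a j)%N.
  move=> /subnK <-; elim: (j - i.+1)%N => [|d IHd] /=; first exact: ainc.
  by rewrite addSn; apply: ltn_trans IHd (ainc _).
have age n : (n <= a n)%N.
  by elim: n => [//|n IHn]; apply: leq_ltn_trans IHn (ainc n).
have [bv hbv] : exists bv, forall n, exists i, (n <= i)%N /\ bb i = bv.
  have [hT|hT] := pselect (forall n, exists i, (n <= i)%N /\ bb i = true).
    by exists true.
  move/existsNP: hT => [n0 hn0]; exists false => n; exists (maxn n n0); split.
    exact: leq_maxl.
  apply/negbTE/negP => hb; apply: hn0; exists (maxn n n0); split => //.
  exact: leq_maxr.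
exists (fun x => exists i, x = a i /\ bb i = bv), bv; split.
- move=> n; have [i [ni hi]] := hbv n; exists (a i); split.
    exact: leq_trans ni (age i).
  by exists i.
- by move=> x [i [-> _]]; apply: (mono 0%N i) => //; apply: ain.
- case=> [//|x rest] /= srt [sz] hin.
  have [i [xi bi]] := hin x (mem_head _ _).
  have [_ _ _ hom] := spec i.
  rewrite -bi xi; apply: hom => //.
  + exact: path_sorted srt.
  + move=> y yr; have yu : y \in x :: rest by rewrite inE yr orbT.
    have [j [yj _]] := hin y yu.
    have xy : (x < y)%N.
      by have := order_path_min ltn_trans srt; move/allP => /(_ y yr).
    have ij : (i < j)%N.
      case: (ltnP i j) => // ji.
      have : (a j <= a i)%N.
        by move: ji; rewrite leq_eqVlt => /orP [/eqP -> //|/amono/ltnW].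
      by rewrite -xi -yj leqNgt xy.
    by rewrite yj; apply: (mono i.+1 j ij); apply: ain.
Qed.

Lemma ramsey_multi k (cs : nat -> seq nat -> bool) (n : nat) (P : nat -> Prop) :
  infP P -> exists Q, [/\ infP Q, (forall x, Q x -> P x) &
    forall t, (t < n)%N -> exists b, forall u, sorted ltn u -> size u = k ->
      allin Q u -> cs t u = b].
Proof.
move=> hP; elim: n => [|n [Q [hQ QP hom]]].
  by exists P; split.
have [Q' [b [hQ' Q'Q hom']]] := ramsey k (cs n) hQ.
exists Q'; split => //; first by move=> x /Q'Q /QP.
move=> t; rewrite ltnS leq_eqVlt => /orP [/eqP ->|tn]; first by exists b.
have [b' hb'] := hom t tn; exists b' => u su szu hu; apply: hb' => // x /hu.
exact: Q'Q.
Qed.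

Lemma enumP (Q : nat -> Prop) : infP Q ->
  exists e : nat -> nat, (forall n, Q (e n)) /\ forall n, (e n < e n.+1)%N.
Proof.
move=> hQ; have [nx hnx] := choice (P := fun n x => (n < x)%N /\ Q x) (fun n => hQ n.+1).
pose e := fix e n := if n is n'.+1 then nx (e n') else nx 0%N.
exists e; split; first by case=> [|n] /=; [have [] := hnx 0%N | have [] := hnx (e n)].
by move=> n /=; have [] := hnx (e n).
Qed.

Lemma rem_map_inj (e : nat -> nat) : injective e -> forall j L,
  rem (e j) (map e L) = map e (rem j L).
Proof.
move=> ei j; elim=> [//|x L IH] /=; rewrite (inj_eq ei).
by case: eqP => // _; rewrite IH.
Qed.

Lemma rem_cat_notin (j : nat) l1 l2 : j \notin l1 -> rem j (l1 ++ l2) = l1 ++ rem j l2.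
Proof.
elim: l1 => [//|x l1 IH] /=; rewrite inE negb_or => /andP [jx jl1].
by rewrite eq_sym (negbTE jx) IH.
Qed.

Lemma nth_rem_iota N j t : (j < N)%N -> (t < N.-1)%N ->
  nth 0%N (rem j (iota 0 N)) t = if (t < j)%N then t else t.+1.
Proof.
move=> jN tN.
have -> : iota 0 N = iota 0 j ++ j :: iota j.+1 (N - j.+1).
  by rewrite -{1}(subnKC (ltnW jN)) iotaD add0n -(subnSK jN).
rewrite rem_cat_notin ?mem_iota ?ltnn ?andbF //= eqxx nth_cat size_iota.
case: ltnP => tj; first by rewrite nth_iota.
rewrite nth_iota; first by lia.
lia.
Qed.

Lemma argmin (R : realType) (f : nat -> R) (L : seq nat) : L != [::] ->
  exists j, j \in L /\ forall i, i \in L -> f j <= f i.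
Proof.
elim: L => [//|x L IH] _; case: L IH => [|x' L'] IH.
  by exists x; split => [|i]; rewrite ?mem_head // inE => /eqP ->.
have [j [jL hj]] := IH isT.
have [fxj|fxj] := leP (f x) (f j).
  exists x; split; first exact: mem_head.
  move=> i; rewrite inE => /orP [/eqP ->//|/hj]; exact: le_trans.
exists j; split; first by rewrite inE jL orbT.
move=> i; rewrite inE => /orP [/eqP ->|/hj //]; exact: ltW.
Qed.

Section Geo.
Variable (R : realType) (V : lmodType R).
Variable y : nat -> V.

Definition ccpos (L : seq nat) (v : V) := exists c : nat -> R,
  (forall i, i \in L -> 0 < c i) /\
  \sum_(i <- L) c i = 1 /\ \sum_(i <- L) c i *: y i = v.

Lemma ccpos_perm L L' v : perm_eq L L' -> ccpos L v -> ccpos L' v.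
Proof.
move=> pe [c [h0 [h1 h2]]]; exists c; rewrite -!(perm_big _ pe); split => //.
by move=> i; rewrite -(perm_mem pe); apply: h0.
Qed.

Lemma cc_pos (Qs : nat -> Prop) m v L :
  (forall L', uniq L' -> size L' = m -> allin Qs L' -> indep y L') ->
  Qs v -> allin Qs L -> uniq L -> size L = m -> v \notin L ->
  cc y L (y v) -> ccpos L (y v).
Proof.
move=> hind Qv QL uL szL vL [c [h0 [h1 h2]]]; exists c; split => //.
move=> i iL; rewrite lt_def h0 // andbT; apply/eqP => ci.
have /cc_aff ha := cc_rem0 iL ci h0 h1 h2.
have vr : v \notin rem i L by apply: contra vL; apply: mem_rem.
apply: (aff_dep ha vr); apply: hind.
- by rewrite /= vr rem_uniq.
- have : (0 < size L)%N by case: (L) iL.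
  by rewrite /= size_rem // => /prednK ->.
- by move=> x; rewrite inE => /orP [/eqP ->//|/mem_rem]; apply: QL.
Qed.

Lemma contra_step (p q j : nat) (B : seq nat) (mu nu g : nat -> R) :
  uniq B -> j \in B -> q \notin B -> indep y B ->
  \sum_(i <- B) mu i = 1 -> \sum_(i <- B) mu i *: y i = y q ->
  \sum_(i <- B) nu i = 1 -> \sum_(i <- B) nu i *: y i = y p ->
  \sum_(i <- q :: rem j B) g i = 1 -> \sum_(i <- q :: rem j B) g i *: y i = y p ->
  forall i, i \in B -> nu i = g q * mu i + (if i == j then 0 else g i).
Proof.
move=> uB jB qB [_ hi] m1 m2 n1 n2 g1 g2.
pose d i := nu i - g q * mu i - (if i == j then 0 else g i).
have hr : forall (T : zmodType) (F : nat -> T),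
    \sum_(i <- B) (if i == j then 0 else F i) = \sum_(i <- rem j B) F i.
  move=> T F; rewrite (sum_rem _ jB) eqxx add0r; apply: eq_big_seq => i.
  by rewrite mem_rem_uniq // inE => /andP [/negbTE ->].
move: g1 g2; rewrite !big_cons => g1 g2.
have d1 : \sum_(i <- B) d i = 0.
  have gs : \sum_(i <- rem j B) g i = 1 - g q by rewrite -g1 addrAC subrr add0r.
  by rewrite /d !sumrB -mulr_sumr hr m1 n1 mulr1 gs subrr.
have d2 : \sum_(i <- B) d i *: y i = 0.
  rewrite /d; under eq_bigr do rewrite !scalerBl -scalerA.
  rewrite !sumrB -scaler_sumr m2 n2.
  have -> : \sum_(i <- B) (if i == j then 0 else g i) *: y i =
            \sum_(i <- rem j B) g i *: y i.
    by rewrite -hr; apply: eq_bigr => i _; case: (i == j); rewrite ?scale0r.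
  have gs : \sum_(i <- rem j B) g i *: y i = y p - g q *: y q.
    by rewrite -g2 addrAC subrr add0r.
  by rewrite gs subrr.
move=> i iB; have := hi d d1 d2 i iB; rewrite /d => /eqP.
by rewrite subr_eq0 subr_eq => /eqP ->; rewrite addrC.
Qed.

Lemma contra_core (p q j1 j2 : nat) (B : seq nat) :
  uniq B -> j1 \in B -> j2 \in B -> j1 != j2 -> q \notin B -> indep y B ->
  ccpos B (y q) -> ccpos B (y p) ->
  ccpos (q :: rem j1 B) (y p) -> ccpos (q :: rem j2 B) (y p) -> False.
Proof.
move=> uB j1B j2B j12 qB iB [mu [mu0 [m1 m2]]] [nu [_ [n1 n2]]]
  [g [g0 [g1 g2]]] [h [h0 [h1 h2]]].
have e1 := contra_step uB j1B qB iB m1 m2 n1 n2 g1 g2.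
have e2 := contra_step uB j2B qB iB m1 m2 n1 n2 h1 h2.
have := e1 j1 j1B; have := e1 j2 j2B; have := e2 j1 j1B; have := e2 j2 j2B.
have mj1 := mu0 _ j1B; have mj2 := mu0 _ j2B.
have gj2 : 0 < g j2.
  by apply: g0; rewrite inE mem_rem_uniq // inE [j2 == j1]eq_sym j12 j2B orbT.
have hj1 : 0 < h j1.
  by apply: h0; rewrite inE mem_rem_uniq // inE j12 j1B orbT.
move=> a b c d; rewrite eqxx addr0 in a; rewrite eqxx addr0 in d.
rewrite (negbTE j12) in b; rewrite eq_sym (negbTE j12) in c.
have X : 0 < (h q - g q) * mu j2 by rewrite mulrBl -a c addrAC subrr add0r.
have Y : 0 < (g q - h q) * mu j1 by rewrite mulrBl -d b addrAC subrr add0r.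
rewrite pmulr_lgt0 // in X; rewrite pmulr_lgt0 // in Y; lra.
Qed.


Definition CP (Q : nat -> Prop) := forall n G, Q n -> uniq G -> allin Q G ->
  n \notin G -> ~ cc y G (y n).
Definition Chain (Q : nat -> Prop) := exists (v0 d : V) (t : nat -> R),
  [/\ d != 0, (forall i j, Q i -> Q j -> (i < j)%N -> t i < t j) &
      forall n, Q n -> y n = v0 + t n *: d].
Definition Outcome (P : nat -> Prop) := exists Q,
  [/\ infP Q, (forall x, Q x -> P x) & CP Q \/ Chain Q].

Hypothesis hy : injective y.

Lemma base01 b sb P : infP P -> (size sb <= 1)%N ->
  (forall n, P n -> aff b sb (y n)) -> False.
Proof.
move=> hP; case: sb => [|s0 [|//]] _ hb.
  have [n [_ Pn]] := hP 0%N; have [c [h1 _]] := hb n Pn.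
  by move: h1; rewrite big_nil => /eqP; rewrite eq_sym oner_eq0.
have [n1 [_ P1]] := hP 0%N; have [n2 [n12 P2]] := hP n1.+1.
have e n : P n -> y n = b s0.
  by move=> Pn; have [c [h1 h2]] := hb n Pn; move: h1 h2; rewrite !big_seq1 => -> <-; rewrite scale1r.
have := hy (etrans (e _ P1) (esym (e _ P2))).
by move=> h; move: n12; rewrite h ltnn.
Qed.

Lemma base2 b sb P : infP P -> indep b sb -> size sb = 2 ->
  (forall n, P n -> aff b sb (y n)) -> Outcome P.
Proof.
move=> hP [usb hib]; case: sb usb hib => [//|s0 [//|s1 [|//]]] usb hib _ hb.
have s01 : s0 != s1 by move: usb; rewrite /= inE andbT.
set d := b s1 - b s0.
have [T hT] : exists T : nat -> R, forall n, P n -> y n = b s0 + T n *: d.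
  have : forall n, exists t : R, P n -> y n = b s0 + t *: d.
    move=> n; have [Pn|Pn] := pselect (P n); last by exists 0.
    have [c [h1 h2]] := hb n Pn; exists (c s1) => _.
    move: h1 h2; rewrite !big_cons !big_nil !addr0 => h1 <-.
    have -> : c s0 = 1 - c s1 by rewrite -h1 addrK.
    by rewrite /d scalerBl scale1r scalerBr -!addrA; congr (_ + _); rewrite addrC.
  by move=> /choice [T hT]; exists T.
have d0 : d != 0.
  apply/eqP => d0.
  have := hib (fun i => if i == s0 then -1 else 1).
  rewrite !big_cons !big_nil !eqxx eq_sym (negbTE s01).
  rewrite !addr0 addNr => /(_ erefl).
  have : -1 *: b s0 + 1 *: b s1 = 0 by rewrite scaleN1r scale1r addrC.
  by move=> h /(_ h s0 (mem_head _ _)) /eqP; rewrite eqxx oppr_eq0 oner_eq0.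
have Tinj i j : P i -> P j -> T i = T j -> i = j.
  by move=> Pi Pj e; apply: hy; rewrite hT // hT // e.
have [Q [bv [hQ QP hom]]] := ramsey 2 (fun u => T (nth 0%N u 0) < T (nth 0%N u 1)) hP.
have hom2 i j : Q i -> Q j -> (i < j)%N -> (T i < T j) = bv.
  move=> Qi Qj ij; apply: (hom [:: i; j]) => //=; first by rewrite ij.
  by move=> x; rewrite !inE => /orP [/eqP ->|/eqP ->].
exists Q; split => //; right.
case: bv hom hom2 => _ hom2.
  by exists (b s0), d, T; split => // n /QP; apply: hT.
exists (b s0), (- d), (fun n => - T n); split.
- by rewrite oppr_eq0.
- move=> i j Qi Qj ij; rewrite ltrN2 lt_def; have := hom2 _ _ Qi Qj ij.
  move/negbT; rewrite -leNgt => ->; rewrite andbT.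
  apply/eqP => e; move: ij; by rewrite (Tinj _ _ (QP _ Qj) (QP _ Qi) (esym e)) ltnn.
- by move=> n Qn; rewrite scaleNr scalerN opprK; apply: hT; apply: QP.
Qed.

Lemma cara b sb G v : uniq G -> (size sb < size G)%N ->
  (forall i, i \in G -> aff b sb (y i)) -> cc y G v ->
  exists j, j \in G /\ cc y (rem j G) v.
Proof.
move=> uG lt ha [l [l0 [l1 l2]]].
have [[j [jG lj]]|allpos] := pselect (exists j, j \in G /\ l j = 0).
  by exists j; split => //; apply: (cc_rem0 jG lj l0 l1 l2).
have ndep := steinitz uG lt ha.
have [c [c1 c2 [j [jG cj]]]] : exists c : nat -> R,
    [/\ \sum_(i <- G) c i = 0, \sum_(i <- G) c i *: y i = 0 &
        exists j, j \in G /\ 0 < c j].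
  apply: contrapT => hn; apply: ndep; split => // c h1 h2 i iG.
  apply/eqP/negP => /negP ci; apply: hn.
  have [cp|cn] := boolP (0 < c i); first by exists c; split => //; exists i.
  exists (fun k => - c k); split.
  - by rewrite sumrN h1 oppr0.
  - by under eq_bigr do rewrite scaleNr; rewrite sumrN h2 oppr0.
  - exists i; split => //; rewrite oppr_gt0 lt_neqAle ci /=; move: cn.
    by rewrite -leNgt.
set L := [seq i <- G | 0 < c i].
have jL : j \in L by rewrite mem_filter cj.
have Ln : L != [::] by apply/eqP => h; move: jL; rewrite h.
have [j0 [j0L hj0]] := argmin (fun i => l i / c i) Ln.
move: (j0L); rewrite mem_filter => /andP [cj0 j0G].
set th := l j0 / c j0.
have th0 : 0 <= th by rewrite divr_ge0 ?l0 // ltW.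
exists j0; split => //.
apply: (@cc_rem0 _ _ y G j0 (fun i => l i - th * c i)) => //.
- by rewrite /th divfK ?subrr // gt_eqF.
- move=> i iG; rewrite subr_ge0.
  have [ci|ci] := ltP 0 (c i).
    have iL : i \in L by rewrite mem_filter ci iG.
    by have := hj0 i iL; rewrite -/th ler_pdivlMr.
  by apply: le_trans (l0 i iG); apply: mulr_ge0_le0.
- by rewrite sumrB -mulr_sumr c1 mulr0 subr0.
- under eq_bigr do rewrite scalerBl -scalerA.
  by rewrite sumrB -scaler_sumr c2 scaler0 subr0.
Qed.

Lemma cp_case m b sb (Q : nat -> Prop) : infP Q -> size sb = m ->
  (forall n, Q n -> aff b sb (y n)) ->
  (forall t, (t < m.+1)%N -> forall u, sorted ltn u -> size u = m.+1 ->
     allin Q u -> ~ cc y (rem (nth 0%N u t) u) (y (nth 0%N u t))) ->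
  CP Q.
Proof.
move=> hQ szb hb homF n G0 Qn.
have extras : forall k (L : seq nat), exists E,
    [/\ size E = k, uniq E, allin Q E & forall x, x \in E -> x \notin L].
  elim=> [|k IHk] L; first by exists [::]; split.
  have [E [sE uE aE dE]] := IHk L.
  have [x [xge Qx]] := hQ (\max_(i <- L ++ E) i).+1.
  have xn : x \notin L ++ E.
    apply/negP => xin.
    have := @leq_bigmax_seq _ (L ++ E) xpredT (fun i => i) x xin isT.
    by rewrite leqNgt xge.
  exists (x :: E); split => /=.
  - by rewrite sE.
  - by rewrite uE andbT; apply: contra xn; rewrite mem_cat => ->; rewrite orbT.
  - by move=> z; rewrite inE => /orP [/eqP ->|/aE].
  - move=> z; rewrite inE => /orP [/eqP ->|/dE //].
    by apply: contra xn; rewrite mem_cat => ->.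
have small : forall G, (size G <= m)%N -> uniq G -> allin Q G -> n \notin G ->
    ~ cc y G (y n).
  move=> G szG uG aG nG hcc.
  have [E [sE uE aE dE]] := extras (m - size G)%N (n :: G).
  set U := n :: G ++ E.
  have nE : n \notin E by apply/negP => nE; have := dE n nE; rewrite mem_head.
  have uGE : uniq (G ++ E).
    rewrite cat_uniq uG uE andbT; apply/hasPn => x xE; have := dE x xE.
    by rewrite inE negb_or => /andP [_].
  have nGE : n \notin G ++ E by rewrite mem_cat negb_or nG.
  have uU : uniq U by rewrite /U /= nGE.
  have sU : size U = m.+1 by rewrite /U /= size_cat sE subnKC.
  set u := sort leq U.
  have su : sorted ltn u.
    by rewrite ltn_sorted_uniq_leq sort_uniq uU sort_sorted //; exact: leq_total.
  have nu : n \in u by rewrite mem_sort mem_head.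
  have hcc' : cc y (rem (nth 0%N u (index n u)) u) (y (nth 0%N u (index n u))).
    rewrite nth_index //; apply: (@cc_perm _ _ y (G ++ E)).
      apply: uniq_perm => //; first by rewrite rem_uniq // sort_uniq.
      move=> x; rewrite mem_rem_uniq ?sort_uniq // inE mem_sort /U inE.
      by case: (eqVneq x n) => [->|] //=; rewrite (negbTE nGE).
    apply: (cc_sub uG uGE _ hcc) => x xG; rewrite mem_cat xG.
    done.
  apply: (homF (index n u) _ u su _ _ hcc').
  - by rewrite -sU -(size_sort leq) index_mem.
  - by rewrite size_sort.
  - move=> x; rewrite mem_sort /U inE mem_cat => /orP [/eqP ->//|/orP [/aG|/aE]] //.
suff H : forall k G, (size G <= k)%N -> uniq G -> allin Q G -> n \notin G ->
    ~ cc y G (y n) by apply: (H (size G0)).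
elim=> [|k IHk] G szG uG aG nG hcc.
  by apply: (small G _ uG aG nG hcc); apply: leq_trans szG _.
have [sm|bg] := leqP (size G) m; first exact: (small G sm uG aG nG hcc).
have lt : (size sb < size G)%N by rewrite szb.
have [j [jG hj]] := cara uG lt (fun i iG => hb i (aG i iG)) hcc.
apply: (IHk (rem j G)) hj.
- by rewrite size_rem // -ltnS prednK // (leq_ltn_trans _ bg).
- exact: rem_uniq.
- by move=> x /mem_rem /aG.
- by apply: contra nG; apply: mem_rem.
Qed.

Lemma zlemma m (Q : nat -> Prop) (Z : seq nat) p q j1 j2 :
  (forall L, uniq L -> size L = m -> allin Q L -> indep y L) ->
  uniq Z -> size Z = m.+2 -> allin Q Z ->
  p \in Z -> q \in Z -> j1 \in Z -> j2 \in Z ->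
  p != q -> j1 != j2 -> j1 != p -> j1 != q -> j2 != p -> j2 != q ->
  cc y (rem p (rem q Z)) (y p) -> cc y (rem q (rem p Z)) (y q) ->
  cc y (rem p (rem j1 Z)) (y p) -> cc y (rem p (rem j2 Z)) (y p) -> False.
Proof.
move=> hind uZ szZ aZ pZ qZ j1Z j2Z pq j12 j1p j1q j2p j2q hp hq h1 h2.
have mem2 a c x : x \in rem a (rem c Z) = [&& x != a, x != c & x \in Z].
  by rewrite mem_rem_uniq ?rem_uniq // inE mem_rem_uniq // inE.
have sz2 a c : a \in Z -> c \in Z -> a != c -> size (rem a (rem c Z)) = m.
  move=> aZ' cZ ac; rewrite size_rem; last by rewrite mem_rem_uniq // inE ac aZ'.
  by rewrite size_rem // szZ.
have u2 a c : uniq (rem a (rem c Z)) by rewrite !rem_uniq.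
have a2 a c : allin Q (rem a (rem c Z)) by move=> x /mem_rem /mem_rem /aZ.
set B := rem p (rem q Z).
have iB : indep y B := hind B (u2 _ _) (sz2 p q pZ qZ pq) (a2 _ _).
have pB : p \notin B by rewrite mem2 eqxx.
have qB : q \notin B by rewrite mem2 eqxx andbF.
have ccq : ccpos B (y q).
  apply: (cc_pos hind (aZ q qZ) (a2 _ _) (u2 _ _) (sz2 p q pZ qZ pq) qB).
  apply: (@cc_perm _ _ y (rem q (rem p Z))) hq.
  apply: uniq_perm => // x; rewrite !mem2.
  by case: (x != p); case: (x != q).
have ccp : ccpos B (y p).
  exact: (cc_pos hind (aZ p pZ) (a2 _ _) (u2 _ _) (sz2 p q pZ qZ pq) pB hp).
have ccj j : j \in Z -> j != p -> j != q -> cc y (rem p (rem j Z)) (y p) ->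
    ccpos (q :: rem j B) (y p).
  move=> jZ jp jq h.
  have pj : p != j by rewrite eq_sym.
  apply: (@ccpos_perm (rem p (rem j Z))).
    apply: uniq_perm => //.
      apply/andP; split; first by apply: contra qB; exact: mem_rem.
      exact: rem_uniq (u2 _ _).
    move=> x; rewrite mem2 inE mem_rem_uniq ?u2 // !inE /B mem2.
    case: (eqVneq x q) => [->|xq] /=; first by rewrite eq_sym pq eq_sym jq qZ.
    by case: (x != p); case: (x != j).
  apply: (cc_pos hind (aZ p pZ) (a2 _ _) (u2 _ _) (sz2 p j pZ jZ pj) _ h).
  by rewrite mem2 eqxx.
apply: (@contra_core p q j1 j2 B) => //.
- exact: u2.
- by rewrite mem2 j1p j1q j1Z.
- by rewrite mem2 j2p j2q j2Z.
- exact: ccj.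
- exact: ccj.
Qed.

Lemma contra_case m (Q : nat -> Prop) t : (3 <= m)%N -> infP Q ->
  (forall L, uniq L -> size L = m -> allin Q L -> indep y L) -> (t < m.+1)%N ->
  (forall u, sorted ltn u -> size u = m.+1 -> allin Q u ->
     cc y (rem (nth 0%N u t) u) (y (nth 0%N u t))) -> False.
Proof.
move=> m3 hQ hind tm homT.
have [e [eQ einc]] := enumP hQ.
have emono i j : (i < j)%N -> (e i < e j)%N.
  move=> /subnK <-; elim: (j - i.+1)%N => [|d IHd] /=; first exact: einc.
  by rewrite addSn; apply: ltn_trans IHd (einc _).
have einj : injective e.
  move=> i j eij; case: (ltngtP i j) => // ij.
    by move: (emono _ _ ij); rewrite eij ltnn.
  by move: (emono _ _ ij); rewrite eij ltnn.
set Z := map e (iota 0 m.+2).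
have uZ : uniq Z by rewrite map_inj_uniq // iota_uniq.
have sZ : sorted ltn Z.
  rewrite sorted_map; apply: (sub_sorted _ (iota_ltn_sorted 0 m.+2)).
  by move=> i j /= /emono.
have szZ : size Z = m.+2 by rewrite size_map size_iota.
have aZ : allin Q Z by move=> x /mapP [i _ ->].
have eZ i : (i < m.+2)%N -> e i \in Z by move=> im; apply: map_f; rewrite mem_iota.
have key j : (j < m.+2)%N ->
    cc y (rem (e (if (t < j)%N then t else t.+1)) (rem (e j) Z))
         (y (e (if (t < j)%N then t else t.+1))).
  move=> jm.
  have hn : nth 0%N (rem (e j) Z) t = e (if (t < j)%N then t else t.+1).
    rewrite /Z rem_map_inj // (nth_map 0%N); first by rewrite nth_rem_iota.
    by rewrite size_rem ?mem_iota //= size_iota.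
  rewrite -hn; apply: homT.
  - apply: (subseq_sorted ltn_trans (rem_subseq _ _)); exact: sZ.
  - by rewrite size_rem ?eZ // szZ.
  - by move=> x /mem_rem /aZ.
have kk j : (t < j)%N -> (j < m.+2)%N -> cc y (rem (e t) (rem (e j) Z)) (y (e t)).
  by move=> tj jm; have := key j jm; rewrite tj.
have kk' j : (j <= t)%N -> (j < m.+2)%N ->
    cc y (rem (e t.+1) (rem (e j) Z)) (y (e t.+1)).
  by move=> tj jm; have := key j jm; rewrite ltnNge tj.
have ne a c : a != c -> e a != e c by rewrite (inj_eq einj).
have [ts|tb] := leqP t.+2 m.
  apply: (@zlemma m Q Z (e t) (e t.+1) (e t.+2) (e t.+3)) => //;
    try (apply: eZ; lia); try (apply: ne; lia).
  - apply: kk => //; lia.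
  - apply: kk' => //; lia.
  - apply: kk => //; lia.
  - apply: kk => //; lia.
apply: (@zlemma m Q Z (e t.+1) (e t) (e 0) (e 1)) => //;
  try (apply: eZ; lia); try (apply: ne; lia).
- apply: kk' => //; lia.
- apply: kk => //; lia.
- apply: kk' => //; lia.
- apply: kk' => //; lia.
Qed.

Lemma outcome_sub (P Q : nat -> Prop) : (forall x, Q x -> P x) -> Outcome Q -> Outcome P.
Proof.
by move=> QP [Q' [h1 h2 h3]]; exists Q'; split => // x /h2 /QP.
Qed.

Lemma step m : (3 <= m)%N ->
  (forall m', (m' < m)%N -> forall b sb P, infP P -> indep b sb ->
     size sb = m' -> (forall n, P n -> aff b sb (y n)) -> Outcome P) ->
  forall b sb P, infP P -> indep b sb -> size sb = m ->
    (forall n, P n -> aff b sb (y n)) -> Outcome P.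
Proof.
move=> m3 IH b sb P hP ib szb hb.
have [Q1 [bv1 [hQ1 Q1P hom1]]] := ramsey m (fun u => `[< indep y u >]) hP.
have sortP (L : seq nat) : uniq L -> sorted ltn (sort leq L).
  by move=> uL; rewrite ltn_sorted_uniq_leq sort_uniq uL sort_sorted //; exact: leq_total.
case: bv1 hom1 => hom1.
  have indm L : uniq L -> size L = m -> allin Q1 L -> indep y L.
    move=> uL sL aL; apply: (@indep_perm _ _ y (sort leq L)).
      by rewrite perm_sort.
    apply/asboolP; apply: hom1; rewrite ?size_sort //; first exact: sortP.
    by move=> x; rewrite mem_sort => /aL.
  pose cs t u := `[< cc y (rem (nth 0%N u t) u) (y (nth 0%N u t)) >].
  have [Q2 [hQ2 Q2Q1 hom2]] := ramsey_multi m.+1 cs m.+1 hQ1.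
  have indm2 L : uniq L -> size L = m -> allin Q2 L -> indep y L.
    by move=> uL sL aL; apply: indm => // x /aL /Q2Q1.
  have [[t [tm homt]]|noT] := pselect (exists t, (t < m.+1)%N /\
      forall u, sorted ltn u -> size u = m.+1 -> allin Q2 u -> cs t u = true).
    exfalso; apply: (contra_case m3 hQ2 indm2 tm) => u su szu au.
    by apply/asboolP; apply: homt.
  exists Q2; split => //; first by move=> x /Q2Q1 /Q1P.
  left; apply: (cp_case hQ2 szb (fun n Qn => hb n (Q1P n (Q2Q1 n Qn)))).
  move=> t tm u su szu au hcc; have [bt hbt] := hom2 t tm.
  case: bt hbt => hbt.
    by apply: noT; exists t; split.
  by have := hbt u su szu au; rewrite /cs; move/asboolP: hcc => ->.
have bound L : indep y L -> allin Q1 L -> (size L < m)%N.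
  move=> iL aL; rewrite ltnNge; apply/negP => mL.
  have uL : uniq L by case: iL.
  set u := take m (sort leq L).
  have su : sorted ltn u by apply: take_sorted; apply: sortP.
  have szu : size u = m by rewrite size_takel // size_sort.
  have au : allin Q1 u by move=> x /mem_take; rewrite mem_sort => /aL.
  have iu : indep y u.
    apply: (@indep_sub _ _ y (sort leq L)).
    - by apply: (@indep_perm _ _ y L) => //; rewrite perm_sym perm_sort.
    - exact: (sorted_uniq ltn_trans ltnn su).
    - by move=> x /mem_take.
  by have := hom1 u su szu au; move/asboolP: iu => ->.
have grow : forall r s', (m - size s' <= r)%N -> indep y s' -> allin Q1 s' ->
    exists s'', [/\ indep y s'', allin Q1 s'' & forall n, Q1 n -> aff y s'' (y n)].
  elim=> [|r IHr] s' hr is' as'.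
    by have := bound s' is' as'; lia.
  have [hall|] := pselect (forall n, Q1 n -> aff y s' (y n)); first by exists s'.
  move=> /existsNP [n /not_implyP [Qn na]].
  apply: (IHr (n :: s')).
  - by have := bound s' is' as'; move: hr => /=; lia.
  - exact: indep_cons.
  - by move=> x; rewrite inE => /orP [/eqP ->|/as'].
have i0 : indep y [::] by split => // c _ _ i; rewrite in_nil.
have a0 : allin Q1 [::] by move=> x; rewrite in_nil.
have [s'' [is'' as'' hs'']] := grow m [::] (leq_subr _ _) i0 a0.
apply: (outcome_sub Q1P).
exact: (IH (size s'') (bound _ is'' as'') y s'' Q1 hQ1 is'' erefl hs'').
Qed.

Lemma main m : forall b sb P, infP P -> indep b sb -> size sb = m ->
  (forall n, P n -> aff b sb (y n)) -> Outcome P.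
Proof.
elim/ltn_ind: m => m IH b sb P hP ib szb hb.
have [m3|m3] := leqP 3 m; first exact: (step m3 IH hP ib szb hb).
have [m1|m1] := leqP m 1.
  by exfalso; apply: (base01 hP _ hb); rewrite szb.
have m2 : m = 2 by lia.
by apply: (base2 hP ib _ hb); rewrite szb.
Qed.

End Geo.

Local Open Scope classical_set_scope.
Section Hull.
Variable (R : realType) (V : lmodType R).
Implicit Types (A B : set V).

Lemma hull_sub A : A `<=` conv_hull A.
Proof. by move=> x Ax K _ hAK; exact: hAK. Qed.

Lemma hull_min A (K : set (convex_lmodType V)) : convex_set K -> A `<=` K ->
  conv_hull A `<=` K.
Proof. by move=> cC hAK x hx; exact: hx K cC hAK. Qed.

Lemma hull_convex A : convex_set (conv_hull A : set (convex_lmodType V)).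
Proof.
move=> a c l /set_mem ha /set_mem hc; apply/mem_set => K cC hAK.
exact: (set_mem (cC a c l (mem_set (ha K cC hAK)) (mem_set (hc K cC hAK)))).
Qed.

Lemma hull_mono A B : A `<=` B -> conv_hull A `<=` conv_hull B.
Proof.
move=> AB; apply: hull_min; first exact: hull_convex.
by move=> x /AB; apply: hull_sub.
Qed.

Lemma seg_in (K : set (convex_lmodType V)) (a c : V) (s : R) : convex_set K ->
  K a -> K c -> 0 <= s -> s <= 1 -> K (s *: a + (1 - s) *: c).
Proof.
move=> cC Ca Cc s0 s1.
exact: (set_mem (cC a c (Itv01 s0 s1) (mem_set Ca) (mem_set Cc))).
Qed.

Lemma cc_convex (P : nat -> V) L :
  convex_set ([set v | cc P L v] : set (convex_lmodType V)).
Proof.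
move=> a c l /set_mem [ca [ca0 [ca1 ca2]]] /set_mem [cb [cb0 [cb1 cb2]]].
apply/mem_set; exists (fun i => l%:num * ca i + (1 - l%:num) * cb i).
split; [|split].
- move=> i iL; have h1 := ca0 i iL; have h2 := cb0 i iL.
  have l0 : 0 <= l%:num := ge0 l; have l1 : l%:num <= 1 := le1 l.
  by apply: addr_ge0; apply: mulr_ge0 => //; rewrite subr_ge0.
- by rewrite big_split /= -!mulr_sumr ca1 cb1 !mulr1 addrC subrK.
- under eq_bigr do rewrite scalerDl -!scalerA.
  by rewrite big_split /= -!scaler_sumr ca2 cb2.
Qed.

Lemma hull_cc (P : nat -> V) L : uniq L ->
  conv_hull [set P i | i in [set` L]] `<=` [set v | cc P L v].
Proof.
move=> uL; apply: hull_min; first exact: cc_convex.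
by move=> v [i /= iL <-]; apply: cc_mem.
Qed.

End Hull.

Section Final.
Variable (R : realType) (V : lmodType R).

Lemma inj_seq (X : set V) : ~ finite_set X ->
  exists y : nat -> V, injective y /\ forall n, X (y n).
Proof.
move=> nf.
have hnx : forall s : seq V, exists v, X v /\ v \notin s.
  move=> s; apply: contrapT => h; apply: nf.
  apply: (sub_finite_set _ (finite_seq s)) => v Xv /=.
  by apply: contrapT => /negP vs; apply: h; exists v.
have [f hf] := choice hnx.
pose L := fix L n := if n is n'.+1 then f (L n') :: L n' else [::].
have memL i j : (i < j)%N -> f (L i) \in L j.
  move=> /subnK <-; elim: (j - i.+1)%N => [|d IHd] /=; first exact: mem_head.
  by rewrite ?addSn /= inE IHd orbT.
exists (fun n => f (L n)); split; last by move=> n; case: (hf (L n)).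
move=> i j e; case: (ltngtP i j) => // ij.
  by have := memL _ _ ij; rewrite e; case: (hf (L j)) => _ /negbTE ->.
by have := memL _ _ ij; rewrite -e; case: (hf (L i)) => _ /negbTE ->.
Qed.

Lemma indep_CP (y : nat -> V) (Q : nat -> Prop) :
  (forall L, uniq L -> allin Q L -> indep y L) -> CP y Q.
Proof.
move=> hI n G Qn uG aG nG hcc; apply: (aff_dep (cc_aff hcc) nG).
apply: hI; first by rewrite /= nG.
by move=> x; rewrite inE => /orP [/eqP ->|/aG].
Qed.

Lemma outcome_all (y : nat -> V) : injective y -> Outcome y (fun _ => True).
Proof.
move=> hy.
have [hA|hB] := pselect (forall s : seq nat, uniq s -> exists n, ~ aff y s (y n)).
  have nxt : forall L : seq nat, exists n,
      uniq L -> (size L <= n)%N /\ ~ aff y L (y n).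
    move=> L; have [uL|uL] := pselect (uniq L); last by exists 0%N.
    have [n hn] := hA (undup (L ++ iota 0 (size L))) (undup_uniq _).
    exists n => _; split.
      rewrite leqNgt; apply/negP => nl; apply: hn; apply: aff_mem.
        exact: undup_uniq.
      by rewrite mem_undup mem_cat mem_iota nl orbT.
    move=> ha; apply: hn; apply: (aff_sub uL (undup_uniq _) _ ha) => z zL.
    by rewrite mem_undup mem_cat zL.
  have [f hf] := choice nxt.
  pose Ls := fix Ls k := if k is k'.+1 then f (Ls k') :: Ls k' else [::].
  have hLs : forall k, indep y (Ls k) /\ size (Ls k) = k.
    elim=> [|k [ik sk]] /=.
      by split => //; split => // c _ _ i; rewrite in_nil.
    have [_ na] := hf (Ls k) ik.1; split; first exact: indep_cons.
    by rewrite sk.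
  have nest k k' : (k <= k')%N -> {subset Ls k <= Ls k'}.
    move=> /subnK <-; elim: (k' - k)%N => //= d IHd z /IHd.
    by rewrite ?addSn /= inE => ->; rewrite orbT.
  pose Q z := exists k, z \in Ls k.
  have hQ : infP Q.
    move=> n; exists (f (Ls n)); split.
      by have [h _] := hf (Ls n) (hLs n).1.1; rewrite (hLs n).2 in h.
    by exists n.+1; exact: mem_head.
  have sub : forall L, allin Q L -> exists K, {subset L <= Ls K}.
    elim=> [|z L IH] aL; first by exists 0%N.
    have [k1 zk] := aL z (mem_head _ _).
    have [K hK] : exists K, {subset L <= Ls K}.
      by apply: IH => w wL; apply: aL; rewrite inE wL orbT.
    exists (maxn k1 K) => w; rewrite inE => /orP [/eqP ->|/hK].
      exact: nest (leq_maxl _ _) _ zk.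
    exact: nest (leq_maxr _ _) _.
  exists Q; split => //; left; apply: indep_CP => L uL aL.
  have [K hK] := sub L aL.
  exact: indep_sub (hLs K).1 uL hK.
move/existsNP: hB => [s /not_implyP [us /forallNP hs]].
have hs' n : aff y s (y n) by apply: contrapT; apply: hs.
have shrink : forall k s, (size s <= k)%N -> uniq s ->
    (forall n, aff y s (y n)) -> exists s', indep y s' /\ forall n, aff y s' (y n).
  elim=> [|k IHk] s0 sk us0 hs0; have [is0|nis] := pselect (indep y s0);
    try by exists s0.
    by case: s0 sk {us0 hs0} nis => // _; case; split => // c _ _ i; rewrite in_nil.
  have [c [c1 c2 [j [js cj]]]] : exists c : nat -> R,
      [/\ \sum_(i <- s0) c i = 0, \sum_(i <- s0) c i *: y i = 0 &
          exists j, j \in s0 /\ c j != 0].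
    apply: contrapT => h; apply: nis; split => // c h1 h2 i iG.
    apply: contrapT => ci; apply: h; exists c; split => //; exists i; split => //.
    by apply/eqP.
  apply: (IHk (rem j s0)).
  - have s0p : (0 < size s0)%N by case: (s0) js.
    by rewrite size_rem // -ltnS prednK.
  - exact: rem_uniq.
  - by move=> n; apply: (dep_rem us0 js cj c1 c2).
have [s' [is' hs'']] := shrink (size s) s (leqnn _) us hs'.
have hT : infP (fun _ => True) by move=> n; exists n.
exact: (main hy hT is' erefl (fun n _ => hs'' n)).
Qed.


Lemma enum_mono (e : nat -> nat) : (forall n, (e n < e n.+1)%N) ->
  forall i j, (i < j)%N -> (e i < e j)%N.
Proof.
move=> einc i j /subnK <-; elim: (j - i.+1)%N => [|d IHd] /=; first exact: einc.
by rewrite addSn; apply: ltn_trans IHd (einc _).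
Qed.

Lemma enum_inj (e : nat -> nat) : (forall n, (e n < e n.+1)%N) -> injective e.
Proof.
move=> einc i j eij; case: (ltngtP i j) => // ij.
  by move: (enum_mono einc ij); rewrite eij ltnn.
by move: (enum_mono einc ij); rewrite eij ltnn.
Qed.

Lemma join_lemma (X A B : set V) : A `<=` X -> B `<=` X ->
  conv_hull (A `|` B) = conv_hull ((conv_hull A `&` X) `|` (conv_hull B `&` X)).
Proof.
move=> AX BX; apply/seteqP; split.
  apply: hull_mono => v [Av|Bv]; [left|right]; split; try exact: hull_sub.
  - exact: AX.
  - exact: BX.
apply: hull_min; first exact: hull_convex.
move=> v [[hv _]|[hv _]].
  exact: (hull_mono (@subsetUl _ A B) hv).
exact: (hull_mono (@subsetUr _ A B) hv).
Qed.

Lemma fin_list (G : set nat) : finite_set G -> exists L, uniq L /\ G = [set` L].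
Proof.
move=> /finite_seqP [s ->]; exists (undup s); split; first exact: undup_uniq.
by apply/seteqP; split => i /=; rewrite mem_undup.
Qed.

Lemma cc_map (y : nat -> V) (e : nat -> nat) : injective e ->
  forall L v, cc (fun k => y (e k)) L v -> cc y (map e L) v.
Proof.
move=> einj L v [c [c0 [c1 c2]]].
have [einv hinv] : exists einv : nat -> nat, forall i, einv (e i) = i.
  have : forall j, exists i, forall i', e i' = j -> i' = i.
    move=> j; have [[i ei]|ne] := pselect (exists i, e i = j).
      by exists i => i' ei'; apply: einj; rewrite ei ei'.
    by exists 0%N => i' ei'; exfalso; apply: ne; exists i'.
  move=> /choice [einv h]; exists einv => i; exact: esym (h (e i) i erefl).
exists (fun j => c (einv j)); split; [|split].
- by move=> _ /mapP [i iL ->]; rewrite hinv; apply: c0.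
- by rewrite big_map; under eq_bigr do rewrite hinv.
- by rewrite big_map; under eq_bigr do rewrite hinv.
Qed.

Lemma cp_embed (X : set V) (x : nat -> V) : (forall k, X (x k)) ->
  (forall k L, uniq L -> k \notin L -> ~ cc x L (x k)) ->
  exists f, join_embedding X nat_fin_subset setU f.
Proof.
move=> xX hcp; exists (fun F => conv_hull [set x k | k in F] `&` X); split.
- move=> F fF; exists [set x k | k in F]; split => //.
    exact: finite_image.
  by move=> _ [k _ <-].
- have key G k : finite_set G -> (conv_hull [set x k | k in G] `&` X) (x k) -> G k.
    move=> fG [hk _]; have [L [uL eG]] := fin_list fG.
    rewrite eG in hk *; have := hull_cc uL hk => /= hc.
    by case: (boolP (k \in L)) => // kL; exfalso; exact: hcp k L uL kL hc.
  move=> F G fF fG eFG; apply/seteqP; split => k hk; apply: key => //.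
    rewrite -eFG; split; [apply: hull_sub; exists k|exact: xX] => //.
  rewrite eFG; split; [apply: hull_sub; exists k|exact: xX] => //.
- move=> F G _ _; rewrite /Co_join image_setU (join_lemma (X := X)) //.
    by move=> _ [k _ <-].
  by move=> _ [k _ <-].
Qed.


Lemma chain_embed (X : set V) (x : nat -> V) (v0 d : V) (tau : nat -> R) :
  (forall k, X (x k)) -> d != 0 -> (forall i j, (i < j)%N -> tau i < tau j) ->
  (forall k, x k = v0 + tau k *: d) ->
  exists f, join_embedding X nat_fin_interval interval_join f.
Proof.
move=> xX d0 tinc xr.
have tle i j : (i <= j)%N -> tau i <= tau j.
  by rewrite leq_eqVlt => /orP [/eqP ->|/tinc /ltW].
have itv I : nat_fin_interval I -> exists a b L,
    [/\ uniq L, I = [set` L] & forall i, (i \in L) = (a <= i <= b)%N].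
  case=> [->|[a [b ->]]].
    exists 1%N, 0%N, [::]; split => //.
      by apply/seteqP; split => i //=.
    by case.
  exists a, b, (iota a (b.+1 - a)); split; first exact: iota_uniq.
    apply/seteqP; split => i /=.
      by move=> /andP [h1 h2]; rewrite mem_iota h1 /=; lia.
    by rewrite mem_iota => /andP [h1 h2]; rewrite h1 /=; lia.
  move=> i; rewrite mem_iota; apply/idP/idP => /andP [h1 h2]; rewrite h1 /=; lia.
have key I k : nat_fin_interval I ->
    (conv_hull [set x k | k in I] `&` X) (x k) -> I k.
  move=> /itv [a [b [L [uL eI hL]]]] [hk _]; rewrite eI in hk *.
  have [c [c0 [c1 c2]]] := hull_cc uL hk.
  have ct : \sum_(i <- L) c i * tau i = tau k.
    move: c2; under eq_bigr do rewrite xr scalerDr scalerA.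
    rewrite big_split /= -scaler_suml c1 scale1r -scaler_suml xr => /addrI /eqP.
    by rewrite -subr_eq0 -scalerBl scaler_eq0 (negbTE d0) orbF subr_eq0 => /eqP.
  have lo : tau a <= tau k.
    rewrite -ct -[tau a]mul1r -c1 mulr_suml big_seq [X in _ <= X]big_seq.
    apply: ler_sum => i iL; apply: ler_wpM2l; first exact: c0.
    by apply: tle; move: iL; rewrite hL => /andP [].
  have hi : tau k <= tau b.
    rewrite -ct -[tau b]mul1r -c1 mulr_suml big_seq [X in _ <= X]big_seq.
    apply: ler_sum => i iL; apply: ler_wpM2l; first exact: c0.
    by apply: tle; move: iL; rewrite hL => /andP [].
  rewrite /= hL; apply/andP; split.
    by rewrite leqNgt; apply/negP => /tinc; rewrite ltNge lo.
  by rewrite leqNgt; apply/negP => /tinc; rewrite ltNge hi.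
exists (fun F => conv_hull [set x k | k in F] `&` X); split.
- move=> I hI; exists [set x k | k in I]; split => //.
    have [a [b [L [uL eI _]]]] := itv I hI; rewrite eI.
    exact/finite_image/finite_seq.
  by move=> _ [k _ <-].
- move=> I J hI hJ eIJ; apply/seteqP; split => k hk.
    apply: (key J k hJ); rewrite -eIJ; split; last exact: xX.
    by apply: hull_sub; exists k.
  apply: (key I k hI); rewrite eIJ; split; last exact: xX.
  by apply: hull_sub; exists k.
- move=> I J hI hJ; rewrite /Co_join; congr (_ `&` X).
  apply/seteqP; split.
  + apply: hull_min; first exact: hull_convex.
    move=> _ [k [i [j [hi hj /andP [ik kj]]]] <-].
    have xin l : (I `|` J) l -> conv_hull ((conv_hull [set x k | k in I] `&` X)
        `|` (conv_hull [set x k | k in J] `&` X)) (x l).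
      move=> [Il|Jl]; apply: hull_sub; [left|right]; split; try exact: xX;
        by apply: hull_sub; exists l.
    have [ik'|ik'] := eqVneq i k; first by rewrite -ik'; apply: xin.
    have ik2 : (i < k)%N by rewrite ltn_neqAle ik' ik.
    have ij : (i < j)%N := leq_trans ik2 kj.
    have tij := tinc _ _ ij; have tik := tle _ _ ik; have tkj := tle _ _ kj.
    set s := (tau j - tau k) / (tau j - tau i).
    have den : 0 < tau j - tau i by rewrite subr_gt0.
    have s0 : 0 <= s by rewrite divr_ge0 // ?subr_ge0 // ltW.
    have s1 : s <= 1 by rewrite ler_pdivrMr // mul1r; lra.
    have -> : x k = s *: x i + (1 - s) *: x j.
      rewrite !xr !scalerDr !scalerA addrACA -!scalerDl.
      have -> : s + (1 - s) = 1 by rewrite addrC subrK.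
      rewrite scale1r; congr (_ + _ *: d).
      rewrite /s; field.
      by rewrite lt0r_neq0.
    by apply: seg_in => //; [exact: hull_convex | exact: xin | exact: xin].
  + apply: hull_min; first exact: hull_convex.
    move=> v [[hv _]|[hv _]];
      apply: (hull_mono _ hv) => _ [l hl <-]; exists l => //; exists l, l.
      by split; rewrite ?leqnn //; left.
    by split; rewrite ?leqnn //; right.
Qed.

End Final.

Theorem corollary5p4 (R : realType) (V : lmodType R) (X : set V) :
  ~ finite_set X ->
  (exists f : set nat -> set V,
      join_embedding X nat_fin_interval interval_join f) \/
  (exists f : set nat -> set V,
      join_embedding X nat_fin_subset setU f).
Proof.
move=> nf; have [y [hy yX]] := inj_seq nf.
have [Q [hQ _ hout]] := outcome_all hy.
have [e [eQ einc]] := enumP hQ.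
have emono := enum_mono einc; have einj := enum_inj einc.
case: hout => [hcp|[v0 [d [t [d0 tinc hrep]]]]].
- right; apply: (@cp_embed _ _ X (fun k => y (e k))) => // k L uL kL hc.
  apply: (hcp (e k) (map e L) (eQ k)).
  + by rewrite map_inj_uniq.
  + by move=> _ /mapP [i _ ->].
  + by rewrite mem_map.
  + exact: cc_map.
- left; apply: (@chain_embed _ _ X (fun k => y (e k)) v0 d (fun k => t (e k))) => //.
  + by move=> i j ij; apply: tinc; [exact: eQ | exact: eQ | exact: emono].
  + by move=> k; apply: hrep.
Qed.
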